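(* Let $n,a,b\in\mathbb{Z}$ with $n\ge 1$ and $ab\ne 0$, and let $\mathcal{F}_{n,a,b}(x)=x^{2n}+ax^n+b$. Suppose that $\mathcal{F}_{n,a,b}(x)$ is irreducible over $\mathbb{Q}$ and that its Galois group over $\mathbb{Q}$ is abelian. Then $n=2^r3^s$ for some nonnegative integers $r$ and $s$. Furthermore, for every divisor $d\ge 1$ of $n$, the Galois group of $\mathcal{F}_{d,a,b}(x)=x^{2d}+ax^d+b$ over $\mathbb{Q}$ is abelian. *)

(* Defs.v *)
From HB Require Import structures.
From mathcomp Require Import all_boot all_order all_algebra all_fingroup all_solvable all_field.
Set Implicit Arguments. Unset Strict Implicit. Unset Printing Implicit Defensive.
Import GRing.Theory.
Local Open Scope ring_scope.

Definition Fnab (n : nat) (a b : int) : {poly rat} :=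
  'X^(2 * n) + (a%:~R)%:P * 'X^n + (b%:~R)%:P.

(* Splitting fields are unique up to isomorphism, so this does not depend on
   the choice of L and E. *)
Definition gal_abelian (p : {poly rat}) : Prop :=
  forall (L : splittingFieldType rat) (E : {subfield L}),
    splittingFieldFor 1%VS (map_poly (in_alg L) p) E ->
    abelian 'Gal(E / 1%VS)%g.

(* Main.v *)
Require Import Defs.
From HB Require Import structures.
From mathcomp Require Import all_boot all_order all_algebra all_fingroup all_solvable all_field.
From mathcomp Require Import zify ring.
Set Implicit Arguments. Unset Strict Implicit. Unset Printing Implicit Defensive.
Import Order.TTheory GRing.Theory Num.Theory.
Local Open Scope ring_scope.
Lemma mapQ_in_alg (Qr : fieldExtType rat) (f : {rmorphism Qr -> algC}) (p : {poly rat}) :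
  map_poly f (map_poly (in_alg Qr) p) = map_poly ratr p.
Proof.
rewrite -map_poly_comp; apply: eq_map_poly => a.
by rewrite /= rmorphZ_num rmorph1 mulr1.
Qed.

Lemma splitC (p : {poly rat}) : p != 0 ->
 {Qs : splittingFieldType rat & {QsC : {rmorphism Qs -> algC} |
   splittingFieldFor 1 (map_poly (in_alg Qs) p) fullv &
   forall z, root (map_poly ratr p) z -> exists y, QsC y = z}}.
Proof.
move=> p0.
have [r Dr] := closed_field_poly_normal (map_poly (ratr : rat -> algC) p).
have [Qs0 [QsC [s1 Ds1 gen]]] := num_field_exists r.
have spl : splittingFieldFor 1 (map_poly (in_alg Qs0) p) fullv.
  exists s1 => //.
  rewrite -(eqp_map QsC) mapQ_in_alg {1}Dr rmorph_prod /=.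
  rewrite -Ds1 big_map; apply: eqp_trans (eqp_scale _ _) _.
    by rewrite lead_coef_eq0 map_poly_eq0.
  have -> : \prod_(i <- s1) map_poly QsC ('X - i%:P) = \prod_(i <- s1) ('X - (QsC i)%:P).
    by apply: eq_bigr => i _; rewrite map_polyXsubC.
  exact: eqpxx.
have ax : splitting_field_axiom Qs0.
  exists (map_poly (in_alg Qs0) p) => //.
  by apply/polyOver1P; exists p.
pose QsM := FieldExt_isSplittingField.Build _ Qs0 ax.
pose Qs : splittingFieldType rat := HB.pack Qs0 QsM.
exists Qs, QsC => // z.
rewrite Dr rootZ ?lead_coef_eq0 ?map_poly_eq0 // root_prod_XsubC -Ds1.
by case/mapP => y _ ->; exists y.
Qed.

Lemma comm_of_abelian (p : {poly rat}) : p != 0 -> gal_abelian p ->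
 forall nu1 nu2 : {rmorphism algC -> algC}, forall z, root (map_poly ratr p) z ->
   nu1 (nu2 z) = nu2 (nu1 z).
Proof.
move=> p0 Hab nu1 nu2 z rz.
have [Qs [QsC spl Hr]] := splitC p0.
have [y <-] := Hr z rz.
have [f1 Df1] := restrict_aut_to_normal_num_field QsC nu1.
have [f2 Df2] := restrict_aut_to_normal_num_field QsC nu2.
have hom f : kAut 1 fullv (linfun (f : {lrmorphism Qs -> Qs})).
  rewrite kAutfE; apply/kHom_lrmorphism.
  by split=> [x1 x2|]; rewrite !lfunE /= ?rmorphM ?rmorph1.
have [x1 G1 Dx1] := kAut_to_gal (hom f1).
have [x2 G2 Dx2] := kAut_to_gal (hom f2).
have C12 : commute x1 x2 := centsP (Hab Qs fullv spl) x1 G1 x2 G2.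
have E : f1 (f2 y) = f2 (f1 y).
  have := congr1 (fun g : gal_of _ => g y) C12 => /=.
  rewrite !galM ?memvf // -!Dx1 ?memvf // -!Dx2 ?memvf // !lfunE /=.
  by move=> ->.
by rewrite -Df1 -Df2 -Df1 -Df2 E.
Qed.

Lemma trans_of_irr (p : {poly rat}) : irreducible_poly p ->
  forall z w, root (map_poly ratr p) z -> root (map_poly ratr p) w ->
  exists nu : {rmorphism algC -> algC}, nu z = w.
Proof.
move=> irrp z w rz rw.
have p0 : p != 0.
  by case: irrp => sz _; rewrite -size_poly_eq0; case: (size p) sz.
have [Qs [QsC spl Hr]] := splitC p0.
have [y Dy] := Hr z rz; have [y' Dy'] := Hr w rw.
have rt v : root (map_poly ratr p) (QsC v) -> root (map_poly (in_alg Qs) p) v.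
  by rewrite -(mapQ_in_alg QsC) fmorph_root.
have [q Dq] := polyOver1P (minPolyOver 1 y).
have qp : q %| p.
  rewrite -(dvdp_map (in_alg Qs)) -Dq minPoly_dvdp //; last by rewrite rt ?Dy.
  by apply/polyOver1P; exists p.
have sq : size q != 1%N.
  have := size_minPoly 1 y; rewrite Dq size_map_poly => ->; by [].
case: irrp => _ /(_ q sq qp) qp'.
have ry' : root (minPoly 1 y) y'.
  have e : map_poly (in_alg Qs) q %= map_poly (in_alg Qs) p by rewrite eqp_map.
  rewrite Dq (eqp_root e).
  by rewrite rt ?Dy'.
have [g _ Dg] := normalField_root_minPoly (sub1v fullv) (normalFieldf 1) (memvf y) ry'.
have [nu Dnu] := extend_algC_subfield_aut QsC (gal_repr g).
exists nu; rewrite -Dy -Dy' -Dnu; exact: (congr1 QsC Dg).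
Qed.

Lemma PET_full (L : fieldExtType rat) : exists g : L, <<1; g>>%VS = fullv.
Proof.
have ch : has_char0 L by move=> x; rewrite pchar_lalg pchar_num.
suff H s : exists g : L, <<1 & s>>%VS = <<1; g>>%VS.
  have [g Dg] := H (vbasis fullv); exists g; rewrite -Dg.
  apply/eqP; rewrite eqEsubv subvf /= -{1}(span_basis (vbasisP fullv)).
  by apply/span_subvP=> x xs; apply: seqv_sub_adjoin.
elim/last_ind: s => [|s x [g Dg]].
  by exists 0; rewrite Fadjoin_nil Fadjoin0.
have [z Dz] := Primitive_Element_Theorem x (pcharf0_separable 1%AS ch g).
by exists z; rewrite adjoin_rcons Dg.
Qed.

Lemma embC (L : fieldExtType rat) : exists f : {rmorphism L -> algC}, True.
Proof.
have [g Dg] := PET_full L.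
have [q Dq] := polyOver1P (minPolyOver 1 g).
have [w rw] : exists w : algC, root (map_poly ratr q) w.
  apply/closed_rootP; rewrite size_map_poly.
  have := size_minPoly 1 g; rewrite Dq size_map_poly => ->; by [].
pose f0 (c : L) : rat := coord [tuple 1] (ord0 : 'I_1) c.
have f0A (r : rat) : f0 (in_alg L r) = r.
  rewrite /f0 /= linearZ /=.
  have := @coord_free _ _ _ [tuple (1 : L)] ord0 ord0.
  rewrite seq1_free oner_eq0 => /(_ isT) /= ->; by rewrite mulr1.
have f00 : f0 0 = 0 by rewrite /f0 linear0.
have toQK (P : {poly L}) : P \is a polyOver 1%VS ->
    map_poly (in_alg L) (map_poly f0 P) = P.
  case/polyOver1P=> Q ->; congr (map_poly _ _).
  by rewrite -map_poly_comp_id0 ?f00 // (eq_map_poly f0A) map_poly_id.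
pose Q x := map_poly f0 (Fadjoin_poly 1 g x).
have DQ x : map_poly (in_alg L) (Q x) = Fadjoin_poly 1 g x.
  by rewrite toQK // Fadjoin_polyOver.
have Qinj : injective (map_poly (in_alg L)) := map_poly_inj (in_alg L).
pose phi x := (map_poly ratr (Q x)).[w].
have phiB : zmod_morphism phi.
  move=> x y; rewrite /phi -hornerN -hornerD -rmorphB; congr (map_poly _ _).[w].
  by apply: Qinj; rewrite rmorphB /= !DQ raddfB.
have phi1 : phi 1 = 1.
  rewrite /phi; have -> : Q 1 = 1.
    by apply: Qinj; rewrite DQ rmorph1 Fadjoin_polyC ?mem1v.
  by rewrite rmorph1 hornerC.
have phiM : {morph phi : x y / x * y}.
  move=> x y; rewrite /phi -hornerM -rmorphM.
  have -> : Q (x * y) = (Q x * Q y) %% q.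
    apply: Qinj; rewrite map_modp rmorphM /= !DQ -Dq.
    rewrite -Fadjoin_poly_mod; last by rewrite rpredM ?Fadjoin_polyOver.
    by rewrite hornerM !Fadjoin_poly_eq // Dg memvf.
  by rewrite map_modp horner_mod.
pose aM := GRing.isZmodMorphism.Build _ _ phi phiB.
pose mM := GRing.isMonoidMorphism.Build _ _ phi (phi1, phiM).
pose phiRM : {rmorphism L -> algC} := HB.pack phi aM mM.
by exists phiRM.
Qed.


Lemma rootF n a b (x : algC) :
  root (map_poly ratr (Fnab n a b)) x =
  ((x ^+ n) ^+ 2 + a%:~R * x ^+ n + b%:~R == 0).
Proof.
rewrite /Fnab rmorphD rmorphD /= rmorphM /= !map_polyXn !map_polyC /= !ratr_int.
by rewrite rootE !hornerE mulnC exprM.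
Qed.

Lemma part1 n a b : (1 <= n)%N -> b != 0 ->
  irreducible_poly (Fnab n a b) -> gal_abelian (Fnab n a b) ->
  forall p, prime p -> (p %| n)%N -> (p <= 3)%N.
Proof.
move=> n1 b0 irr Hab p pp pn.
set F := Fnab n a b in irr Hab.
have szF : (1 < size F)%N by case: irr.
have F0 : F != 0 by rewrite -size_poly_eq0; case: (size F) szF.
have comm := comm_of_abelian F0 Hab.
have trans := trans_of_irr irr.
have [be rbe] : exists be : algC, root (map_poly ratr F) be.
  by apply/closed_rootP; rewrite size_map_poly; case: (size F) szF => [|[]].
have be0 : be != 0.
  apply: contraNneq b0 => e; move: rbe; rewrite rootF e expr0n eqn0Ngt n1 /=.
  by rewrite expr0n /= mulr0 !add0r intr_eq0.
have [z pz] := C_prim_root_exists n1.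
have zn : z ^+ n = 1 := prim_expr_order pz.
have rootn y : y ^+ n = be ^+ n -> root (map_poly ratr F) y.
  by rewrite rootF => ->; rewrite -rootF.
have rz j : root (map_poly ratr F) (z ^+ j * be).
  by apply: rootn; rewrite exprMn exprAC zn expr1n mul1r.
have Fz (s : {rmorphism algC -> algC}) : exists c : nat, s z = z ^+ c.
  have sz1 : (s z) ^+ n = 1 by rewrite -rmorphXn zn rmorph1.
  have [i ->] := prim_rootP pz sz1.
  by exists i.
have F2 (s : {rmorphism algC -> algC}) c : s z = z ^+ c -> ~~ (p %| c)%N.
  move=> Dc; apply/negP => /dvdnP[k Dk].
  have /dvdnP[m Dm] := pn.
  have : s (z ^+ m) = 1.
    rewrite rmorphXn Dc -exprM Dk.
    have -> : (k * p * m = n * k)%N by rewrite Dm; nia.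
    by rewrite exprM zn expr1n.
  move/eqP; rewrite fmorph_eq1 -(prim_order_dvd pz) => /dvdn_leq.
  have m0 : (0 < m)%N by move: n1; rewrite Dm muln_gt0 => /andP[].
  move=> /(_ m0); rewrite Dm leqNgt => /negP; apply.
  by rewrite -{1}(mul1n m) mulnC ltn_mul2l m0 prime_gt1.
have rz1 : root (map_poly ratr F) (z * be) by rewrite -(expr1 z); apply: rz.
have [s0 Ds0] := trans be (z * be) rbe rz1.
have [c0 Dc0] := Fz s0.
have F1 (s : {rmorphism algC -> algC}) j c : s be = z ^+ j * be -> s z = z ^+ c ->
    (c0 * j + 1 == c + j %[mod n])%N.
  move=> Dj Dc; have := comm s0 s be rbe.
  rewrite Dj Ds0 !rmorphM /= rmorphXn Dc0 Ds0 Dc Dj -exprM !mulrA -exprSr -exprD.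
  move=> /(mulIf be0) /eqP; by rewrite (eq_prim_root_expr pz) addn1.
have F1p (s : {rmorphism algC -> algC}) j c : s be = z ^+ j * be -> s z = z ^+ c ->
    (c0 * j + 1 == c + j %[mod p])%N.
  move=> Dj Dc; move/eqP: (F1 s j c Dj Dc).
  by rewrite -(modn_dvdm (c0 * j + 1) pn) -(modn_dvdm (c + j) pn) => ->.
have c0pos : (0 < c0)%N.
  by rewrite lt0n; apply: contraNneq (F2 s0 c0 Dc0) => ->; exact: dvdn0.
have pc0 : (p %| c0 - 1)%N.
  apply: contraT => npc.
  have [a' _ Ba] := Bezoutl (c0 - 1) (prime_gt0 pp).
  have cop : coprime p (c0 - 1) by rewrite prime_coprime.
  move: Ba; rewrite /coprime in cop; rewrite (eqP cop) => Ba.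
  have [s Ds] := trans be (z ^+ a' * be) rbe (rz a').
  have [c Dc] := Fz s.
  have H := F1p s a' c Ds Dc.
  rewrite (_ : (c0 * a' + 1 = (1 + a' * (c0 - 1)) + a')%N) in H; last by nia.
  rewrite eqn_modDr in H.
  have pc : (p %| c)%N by rewrite /dvdn -(eqP H).
  by have := F2 s c Dc; rewrite pc.
rewrite leqNgt; apply/negP => p3.
have p5 : (4 < p)%N.
  rewrite ltn_neqAle p3 andbT; apply/eqP => e; by rewrite -e in pp.
have n0 : (0 < n)%N := n1.
have [m copm Dn] := pfactor_coprime pp n0.
set q := (p ^ logn p n)%N in Dn.
have e0 : (0 < logn p n)%N by rewrite logn_gt0 mem_primes pp n0 pn.
have pq : (p %| q)%N by rewrite /q -(prednK e0) expnS dvdn_mulr.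
have cqm : coprime q m by apply: coprimeXl.
set u := chinese q m 2 1.
have c2p : coprime 2 p by rewrite prime_coprime // dvdn_prime2 // eq_sym; apply/eqP => e; rewrite e in p5.
have cun : coprime u n.
  rewrite Dn coprimeMr; apply/andP; split.
    by rewrite -coprime_modl /u chinese_modr // coprime_modl coprime1n.
  by rewrite -coprime_modl /u chinese_modl // coprime_modl coprimeXr.
have [nu Dnu] := Qn_aut_exists cun.
pose tau : {rmorphism algC -> algC} := nu \o nu.
have tauz : tau z = z ^+ (u * u).
  rewrite /tau /= (Dnu z zn) Dnu ?exprM //.
  by rewrite -exprM mulnC exprM zn expr1n.
pose al := be ^+ n.
have ral : al ^+ 2 + a%:~R * al + b%:~R = 0 by apply/eqP; rewrite -rootF.
have nual : nu (nu al) = al.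
  have ry : nu al ^+ 2 + a%:~R * nu al + b%:~R = 0.
    by have := congr1 nu ral; rewrite !rmorphD rmorphXn rmorphM !rmorph_int rmorph0.
  have [e|ne] := eqVneq (nu al) al; first by rewrite !e.
  have E : (nu al - al) * (nu al + al + a%:~R) = 0.
    transitivity ((nu al ^+ 2 + a%:~R * nu al + b%:~R) - (al ^+ 2 + a%:~R * al + b%:~R)).
      by ring.
    by rewrite ry ral subrr.
  move/eqP: E; rewrite mulf_eq0 subr_eq0 (negbTE ne) /= => /eqP E.
  have Dy : nu al = - al - a%:~R.
    by apply/eqP; rewrite -subr_eq0 -E; apply/eqP; ring.
  by rewrite {1}Dy rmorphB rmorphN rmorph_int Dy; ring.
have taube : (tau be / be) ^+ n = 1.
  rewrite exprMn exprVn -rmorphXn /tau /= -/al nual /al divff //.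
  by rewrite expf_neq0.
have [j Dj] := prim_rootP pz taube.
have Dtb : tau be = z ^+ j * be by rewrite -Dj divfK.
have H := F1p tau j (u * u)%N Dtb tauz.
rewrite (_ : (c0 * j + 1 = ((c0 - 1) * j + 1) + j)%N) in H; last by nia.
have z0 : ((c0 - 1) * j %% p = 0)%N by apply/eqP; exact: dvdn_mulr.
rewrite eqn_modDr -modnDml z0 add0n -modnMm in H.
have qp : (p <= q)%N by apply: dvdn_leq; rewrite ?expn_gt0 ?prime_gt0.
have u2 : (u %% p = 2)%N.
  rewrite -(modn_dvdm u pq) /u chinese_modl // (modn_small (m := 2)).
    by rewrite modn_small // (leq_trans _ p5).
  by apply: leq_trans qp; apply: leq_trans p5.
rewrite u2 !modn_small // in H; by apply: leq_trans p5.
Qed.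


Lemma part2 n a b d : (1 <= n)%N -> irreducible_poly (Fnab n a b) ->
  gal_abelian (Fnab n a b) -> (1 <= d)%N -> (d %| n)%N -> gal_abelian (Fnab d a b).
Proof.
move=> n1 irr Hab d1 dn L E spl.
have szF : (1 < size (Fnab n a b))%N by case: irr.
have F0 : Fnab n a b != 0 by rewrite -size_poly_eq0; case: (size _) szF.
have comm := comm_of_abelian F0 Hab.
have commd (nu1 nu2 : {rmorphism algC -> algC}) x :
    root (map_poly ratr (Fnab d a b)) x -> nu1 (nu2 x) = nu2 (nu1 x).
  move=> rx; set k := (n %/ d)%N.
  have k0 : (0 < k)%N by rewrite divn_gt0 ?(dvdn_leq n1) // (leq_trans _ d1).
  have [R rR] : exists R, root ('X^k - x%:P) R.
    by apply/closed_rootP; rewrite size_XnsubC // eqSS -lt0n.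
  move: rR; rewrite rootE !hornerE subr_eq0 => /eqP Rk.
  have rRn : root (map_poly ratr (Fnab n a b)) (R).
    by rewrite rootF -(divnK dn) -/k exprM Rk -rootF.
  by rewrite -Rk !rmorphXn (comm nu1 nu2 R rRn).
have [QC _] := embC L.
have ext (g : gal_of E) : g \in 'Gal(E / 1%AS)%g ->
    exists nu : {rmorphism algC -> algC}, forall x, x \in E -> QC (g x) = nu (QC x).
  move=> Gg; have hg : kHom 1 E (gal_repr g) by rewrite -gal_kHom ?sub1v.
  have sub : (1%AS <= E <= fullv)%VS by rewrite sub1v subvf.
  have [g' _ Dg'] := kHom_to_gal sub (normalFieldf 1) hg.
  have [nu Dnu] := extend_algC_subfield_aut QC (gal_repr g').
  by exists nu => x Ex; rewrite -Dnu; congr (QC _); exact: Dg'.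
apply/centsP => g1 G1 g2 G2.
have [nu1 D1] := ext g1 G1; have [nu2 D2] := ext g2 G2.
have [rs Drs DE] := spl.
have key r : r \in rs -> g2 (g1 r) = g1 (g2 r).
  move=> rrs; have Er : r \in E by rewrite -DE seqv_sub_adjoin.
  have rr : root (map_poly ratr (Fnab d a b)) (QC r).
    rewrite -(mapQ_in_alg QC) fmorph_root (eqp_root Drs) root_prod_XsubC //.
  apply: (fmorph_inj QC).
  rewrite D2 ?memv_gal // D1 // D1 ?memv_gal // D2 //.
  by apply: commd.
pose h := ((g1 * g2) * (g2 * g1)^-1)%g.
have hfix : (E <= fixedField [set h])%VS.
  rewrite -{1}DE; apply/Fadjoin_seqP; split; first exact: sub1v.
  move=> r rrs; have Er : r \in E by rewrite -DE seqv_sub_adjoin.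
  apply/fixedFieldP => // y /set1P ->.
  rewrite /h galM ?galM // key //.
  have -> : g1 (g2 r) = (g2 * g1)%g r by rewrite galM.
  by rewrite -galM ?memv_gal // mulgV gal_id.
have h1 : h = 1%g.
  apply/eqP/gal_eqP => x Ex; rewrite gal_id.
  have := subvP hfix x Ex; move/fixedFieldP => /(_ Ex); apply.
  by rewrite inE.
by apply/eqP; rewrite eq_mulgV1 -/h h1.
Qed.


Lemma n23 n : (0 < n)%N -> (forall p, prime p -> (p %| n)%N -> (p <= 3)%N) ->
  exists r s : nat, n = (2 ^ r * 3 ^ s)%N.
Proof.
elim/ltn_ind: n => n IH n0 H.
case: (ltnP 1 n) => [n1|]; last first.
  by move=> n1; exists 0%N, 0%N; apply/eqP; rewrite eqn_leq n1 n0.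
have pp := pdiv_prime n1; have pd := pdiv_dvd n.
have p3 := H _ pp pd.
have p1 := prime_gt1 pp.
have Dn := divnK pd.
have m0 : (0 < n %/ pdiv n)%N by rewrite divn_gt0 ?prime_gt0 // dvdn_leq.
have md : (n %/ pdiv n %| n)%N by apply/dvdnP; exists (pdiv n); rewrite mulnC Dn.
have [r [s Dm]] := IH _ (ltn_Pdiv p1 n0) m0 (fun q qp qd =>
  H q qp (dvdn_trans qd md)).
have : pdiv n = 2%N \/ pdiv n = 3%N by lia.
case=> e.
  by exists r.+1, s; rewrite -Dn Dm e expnS; ring.
by exists r, s.+1; rewrite -Dn Dm e expnS; ring.
Qed.

Theorem lemma2p1 (n : nat) (a b : int) :
  (1 <= n)%N -> a * b != 0 ->
  irreducible_poly (Fnab n a b) -> gal_abelian (Fnab n a b) ->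
  (exists r s : nat, n = (2 ^ r * 3 ^ s)%N) /\
  (forall d : nat, (1 <= d)%N -> (d %| n)%N -> gal_abelian (Fnab d a b)).
Proof.
move=> n1 ab irr Hab; split.
  have b0 : b != 0.
    by apply/eqP => b0; move: ab; rewrite b0 mulr0 eqxx.
  exact: (n23 n1 (part1 n1 b0 irr Hab)).
by move=> d d1 dn; exact: (part2 n1 irr Hab d1 dn).
Qed.
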